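(* Let $X$ be a real Hilbert space and $f:X\to\mathbb{R}$ a proper $\Phi_{lsc}$-convex function. If $f$ is locally $C^{1,1}$ around $\bar x\in X$, then there exists $\delta>0$ such that $\partial_{lsc}f(y)\ne\emptyset$ for every $y$ with $\|y-\bar x\|<\delta$.
   Context: $\Phi_{lsc}$ is the class of functions $\varphi(x)=-a\|x\|^2+\langle v,x\rangle+c$ ($a\ge0$, $v\in X^*$, $c\in\mathbb{R}$); $f$ is $\Phi_{lsc}$-convex if it is the pointwise supremum of the $\varphi\in\Phi_{lsc}$ with $\varphi\le f$; proper means at least one such $\varphi$ exists. $f$ is locally $C^{1,1}$ around $\bar x$ if there is a ball $B(\delta,\bar x)=\{y:\|y-\bar x\|<\delta\}$ on which $f$ is Gâteaux differentiable and its Gâteaux derivative is Lipschitz continuous. $\partial_{lsc}f(y)$ is the set of $(a,v)\in\mathbb{R}_+\times X^*$ with $f(x)-f(y)\ge\langle v,x-y\rangle-a\|x\|^2+a\|y\|^2$ for all $x\in X$. *)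

(* Defs.v *)
From Stdlib Require Import Reals.
Open Scope R_scope.

Record HilbertSpace := {
  H_car :> Type;
  H_zero : H_car;
  H_add : H_car -> H_car -> H_car;
  H_opp : H_car -> H_car;
  H_scal : R -> H_car -> H_car;
  H_inner : H_car -> H_car -> R;
  H_add_assoc : forall x y z, H_add x (H_add y z) = H_add (H_add x y) z;
  H_add_comm : forall x y, H_add x y = H_add y x;
  H_add_zero : forall x, H_add x H_zero = x;
  H_add_opp : forall x, H_add x (H_opp x) = H_zero;
  H_scal_one : forall x, H_scal 1 x = x;
  H_scal_assoc : forall a b x, H_scal a (H_scal b x) = H_scal (a * b) x;
  H_scal_distr_l : forall a x y, H_scal a (H_add x y) = H_add (H_scal a x) (H_scal a y);
  H_scal_distr_r : forall a b x, H_scal (a + b) x = H_add (H_scal a x) (H_scal b x);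
  H_inner_sym : forall x y, H_inner x y = H_inner y x;
  H_inner_add_l : forall x y z, H_inner (H_add x y) z = H_inner x z + H_inner y z;
  H_inner_scal_l : forall a x y, H_inner (H_scal a x) y = a * H_inner x y;
  H_inner_pos : forall x, 0 <= H_inner x x;
  H_inner_def : forall x, H_inner x x = 0 -> x = H_zero;
  H_complete : forall u : nat -> H_car,
    (forall eps, eps > 0 -> exists N, forall m n, (m >= N)%nat -> (n >= N)%nat ->
        sqrt (H_inner (H_add (u m) (H_opp (u n))) (H_add (u m) (H_opp (u n)))) < eps) ->
    exists l, forall eps, eps > 0 -> exists N, forall n, (n >= N)%nat ->
        sqrt (H_inner (H_add (u n) (H_opp l)) (H_add (u n) (H_opp l))) < eps
}.

Arguments H_zero {h}.
Arguments H_add {h}.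
Arguments H_opp {h}.
Arguments H_scal {h}.
Arguments H_inner {h}.

Definition hsub {X : HilbertSpace} (x y : X) : X := H_add x (H_opp y).
Definition hnorm {X : HilbertSpace} (x : X) : R := sqrt (H_inner x x).

Definition in_dual {X : HilbertSpace} (v : X -> R) : Prop :=
  (forall x y, v (H_add x y) = v x + v y) /\
  (forall a x, v (H_scal a x) = a * v x) /\
  (exists C, forall x, Rabs (v x) <= C * hnorm x).

Definition phi_lsc {X : HilbertSpace} (a : R) (v : X -> R) (c : R) (x : X) : R :=
  - a * (hnorm x) ^ 2 + v x + c.

Definition in_Phi_lsc {X : HilbertSpace} (phi : X -> R) : Prop :=
  exists a v c, 0 <= a /\ in_dual v /\ forall x, phi x = phi_lsc a v c x.

Definition Phi_lsc_convex {X : HilbertSpace} (f : X -> R) : Prop :=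
  forall x, is_lub (fun r => exists phi, in_Phi_lsc phi /\
                                   (forall z, phi z <= f z) /\ r = phi x) (f x).

Definition Phi_lsc_proper {X : HilbertSpace} (f : X -> R) : Prop :=
  exists phi, in_Phi_lsc phi /\ forall z, phi z <= f z.

Definition ball {X : HilbertSpace} (delta : R) (xb : X) (y : X) : Prop :=
  hnorm (hsub y xb) < delta.

Definition gateaux_deriv {X : HilbertSpace} (f : X -> R) (y : X) (l : X -> R) : Prop :=
  in_dual l /\
  forall h eps, eps > 0 -> exists d, d > 0 /\ forall t, t <> 0 -> Rabs t < d ->
    Rabs ((f (H_add y (H_scal t h)) - f y) / t - l h) < eps.

(* f locally C^{1,1} around xb: Gateaux differentiable on a ball with Lipschitz
   Gateaux derivative (Lipschitz w.r.t. the dual (operator) norm, unfolded). *)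
Definition locally_C11 {X : HilbertSpace} (f : X -> R) (xb : X) : Prop :=
  exists delta (Df : X -> X -> R) L, delta > 0 /\
    (forall y, ball delta xb y -> gateaux_deriv f y (Df y)) /\
    (forall y z, ball delta xb y -> ball delta xb z ->
       forall h, Rabs (Df y h - Df z h) <= L * hnorm (hsub y z) * hnorm h).

Definition in_subdiff_lsc {X : HilbertSpace} (f : X -> R) (y : X) (a : R) (v : X -> R) : Prop :=
  0 <= a /\ in_dual v /\
  forall x, f x - f y >= v (hsub x y) - a * (hnorm x) ^ 2 + a * (hnorm y) ^ 2.

Definition subdiff_lsc_nonempty {X : HilbertSpace} (f : X -> R) (y : X) : Prop :=
  exists a v, in_subdiff_lsc f y a v.

(* Main.v *)
Require Import Defs.
From Stdlib Require Import Reals Lra.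
Open Scope R_scope.

Section S.
Context {X : HilbertSpace}.
Implicit Types x y z h : X.
Definition NN x := H_inner x x.

Lemma add0l x : H_add H_zero x = x.
Proof. rewrite H_add_comm; apply H_add_zero. Qed.

Lemma add_cancel x y z : H_add x y = H_add x z -> y = z.
Proof.
  intro E. rewrite <- (add0l y), <- (add0l z), <- (H_add_opp X x), (H_add_comm X x).
  rewrite <- !H_add_assoc, E; reflexivity.
Qed.

Lemma scal0 x : H_scal 0 x = H_zero.
Proof.
  apply (add_cancel (H_scal 0 x)). rewrite H_add_zero, <- H_scal_distr_r.
  f_equal; ring.
Qed.

Lemma opp_scal x : H_opp x = H_scal (-1) x.
Proof.
  apply (add_cancel x). rewrite H_add_opp.
  rewrite <- (H_scal_one X x) at 1. rewrite <- H_scal_distr_r.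
  replace (1 + -1) with 0 by ring. now rewrite scal0.
Qed.

Lemma inner_add_r x y z : H_inner x (H_add y z) = H_inner x y + H_inner x z.
Proof. rewrite !(H_inner_sym X x). apply H_inner_add_l. Qed.
Lemma inner_scal_r a x y : H_inner x (H_scal a y) = a * H_inner x y.
Proof. rewrite !(H_inner_sym X x). apply H_inner_scal_l. Qed.

Lemma hsub_scal x y : hsub x y = H_add x (H_scal (-1) y).
Proof. unfold hsub; now rewrite opp_scal. Qed.

Lemma NN_scal t x : NN (H_scal t x) = t^2 * NN x.
Proof. unfold NN. rewrite H_inner_scal_l, inner_scal_r. ring. Qed.

Lemma NN_add x y : NN (H_add x y) = NN x + 2 * H_inner x y + NN y.
Proof. unfold NN. rewrite H_inner_add_l, !inner_add_r, (H_inner_sym X y x). ring. Qed.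

Lemma NN_pos x : 0 <= NN x.
Proof. apply H_inner_pos. Qed.

Lemma hnorm_sq x : hnorm x ^ 2 = NN x.
Proof. unfold hnorm. simpl. rewrite Rmult_1_r. apply sqrt_sqrt, NN_pos. Qed.

Lemma hnorm_pos x : 0 <= hnorm x.
Proof. apply sqrt_pos. Qed.

Lemma NN_add_le x y : NN (H_add x y) <= 2 * NN x + 2 * NN y.
Proof.
  assert (E1 := NN_add x y). assert (E2 := NN_add x (H_scal (-1) y)).
  rewrite NN_scal, inner_scal_r in E2. assert (P := NN_pos (H_add x (H_scal (-1) y))).
  nra.
Qed.

Lemma hnorm_scal t x : hnorm (H_scal t x) = Rabs t * hnorm x.
Proof.
  unfold hnorm. fold (NN (H_scal t x)). rewrite NN_scal.
  rewrite sqrt_mult. 2: nra. 2: apply NN_pos.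
  f_equal. replace (t^2) with (Rsqr t) by (unfold Rsqr; ring). apply sqrt_Rsqr_abs.
Qed.

Lemma CS x y : Rabs (H_inner x y) <= hnorm x * hnorm y.
Proof.
  destruct (Req_dec (NN y) 0) as [Z|Z].
  - apply H_inner_def in Z. subst y.
    replace (@H_zero X) with (H_scal 0 (@H_zero X)) by apply scal0.
    rewrite inner_scal_r, Rmult_0_l, Rabs_R0.
    apply Rmult_le_pos; apply hnorm_pos.
  - assert (Py : 0 < NN y) by (assert (T:= NN_pos y); lra).
    set (t := - H_inner x y / NN y).
    assert (P := NN_pos (H_add x (H_scal t y))).
    rewrite NN_add, NN_scal, inner_scal_r in P.
    assert (Q : (H_inner x y)^2 <= NN x * NN y).
    { unfold t in P. 
      assert (E : 2 * (- H_inner x y / NN y * H_inner x y) + (- H_inner x y / NN y)^2 * NN y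
                 = - (H_inner x y)^2 / NN y) by (field; lra).
      assert (0 <= NN x - (H_inner x y)^2 / NN y) by lra.
      assert (0 <= (NN x - (H_inner x y)^2 / NN y) * NN y) by (apply Rmult_le_pos; lra).
      replace ((NN x - (H_inner x y)^2 / NN y) * NN y) with (NN x * NN y - (H_inner x y)^2) in H0
        by (field; lra). lra. }
    rewrite <- sqrt_Rsqr_abs. unfold hnorm. rewrite <- sqrt_mult by apply NN_pos.
    apply sqrt_le_1_alt. unfold Rsqr. fold (NN x) (NN y). nra.
Qed.

Lemma dual_sub v x y : in_dual v -> v (hsub x y) = v x - v y.
Proof.
  intros [Ha [Hs _]]. rewrite hsub_scal, Ha, Hs. ring.
Qed.

Lemma dual_bound v : in_dual v -> exists C, 0 <= C /\ forall x, Rabs (v x) <= C * hnorm x.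
Proof.
  intros [_ [_ [C HC]]]. exists (Rabs C). split. apply Rabs_pos.
  intro x. eapply Rle_trans. apply HC. apply Rmult_le_compat_r. apply hnorm_pos. apply RRle_abs.
Qed.

Lemma add_hsub x y : H_add y (hsub x y) = x.
Proof.
  unfold hsub. rewrite H_add_comm, <- H_add_assoc, (H_add_comm X (H_opp y)), H_add_opp.
  apply H_add_zero.
Qed.

Lemma hsub_add_l y h xb : hsub (H_add y h) xb = H_add (hsub y xb) h.
Proof.
  unfold hsub. rewrite <- !H_add_assoc. f_equal. apply H_add_comm.
Qed.

Lemma hsub_add_self y h : hsub (H_add y h) y = h.
Proof.
  rewrite hsub_add_l. unfold hsub. rewrite H_add_opp. apply add0l.
Qed.

Lemma add_scal_shift y h t s : H_add (H_add y (H_scal t h)) (H_scal s h) = H_add y (H_scal (t+s) h).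
Proof. rewrite <- H_add_assoc, H_scal_distr_r. reflexivity. Qed.
End S.

Lemma near {X : HilbertSpace} (f : X -> R) xb delta (Df : X -> X -> R) L :
  delta > 0 ->
  (forall y, ball delta xb y -> gateaux_deriv f y (Df y)) ->
  (forall y z, ball delta xb y -> ball delta xb z ->
       forall h, Rabs (Df y h - Df z h) <= L * hnorm (hsub y z) * hnorm h) ->
  forall y h, hnorm (hsub y xb) < delta/2 -> hnorm h < delta/2 ->
  f (H_add y h) - f y - Df y h >= - Rabs L * NN h.
Proof.
  intros Hd HG HL y h Hy Hh.
  assert (Ny : NN (hsub y xb) < delta^2/4).
  { rewrite <- hnorm_sq. assert (T := hnorm_pos (hsub y xb)). nra. }
  assert (Nh : NN h < delta^2/4).
  { rewrite <- hnorm_sq. assert (T := hnorm_pos h). nra. }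
  assert (Bz : forall t, 0 <= t <= 1 -> ball delta xb (H_add y (H_scal t h))).
  { intros t Ht. unfold ball. rewrite hsub_add_l.
    assert (Q := NN_add_le (hsub y xb) (H_scal t h)). rewrite NN_scal in Q.
    assert (P := NN_pos h).
    assert (t^2 * NN h <= NN h) by (assert (t^2 <= 1) by nra; nra).
    assert (Q2 : NN (H_add (hsub y xb) (H_scal t h)) < delta^2) by lra.
    rewrite <- hnorm_sq in Q2. assert (T := hnorm_pos (H_add (hsub y xb) (H_scal t h))). nra. }
  set (g := fun t => f (H_add y (H_scal t h))).
  destruct (MVT_cor2 g (fun t => Df (H_add y (H_scal t h)) h) 0 1) as [c [Ec Hc]].
  - lra.
  - intros t Ht. destruct (HG _ (Bz t Ht)) as [_ G].
    intros eps Heps. destruct (G h eps Heps) as [d [Hdp Hd']].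
    exists (mkposreal d Hdp). intros s Hs Hsd. simpl in Hsd.
    unfold g. rewrite <- add_scal_shift. apply Hd'; auto.
  - unfold g in Ec. rewrite H_scal_one, scal0, H_add_zero in Ec.
    assert (Lc := HL _ _ (Bz c ltac:(lra)) (Bz 0 ltac:(lra)) h).
    rewrite scal0, H_add_zero, hsub_add_self, hnorm_scal in Lc.
    rewrite <- hnorm_sq.
    assert (T := hnorm_pos h).
    assert (Rabs c <= 1) by (rewrite Rabs_right; lra).
    assert (L * (Rabs c * hnorm h) * hnorm h <= Rabs L * hnorm h * hnorm h).
    { assert (L <= Rabs L) by apply RRle_abs. assert (0 <= Rabs L) by apply Rabs_pos.
      assert (0 <= Rabs c) by apply Rabs_pos.
      assert (Rabs c * hnorm h <= hnorm h) by nra. 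
      assert (L * (Rabs c * hnorm h) <= Rabs L * hnorm h).
      { destruct (Rle_dec 0 L). apply Rmult_le_compat; auto. apply Rmult_le_pos; auto.
        assert (0 <= Rabs c * hnorm h) by (apply Rmult_le_pos; auto). nra. }
      apply Rmult_le_compat_r; auto. }
    assert (W := Rle_abs (- (Df (H_add y (H_scal c h)) h - Df y h))). rewrite Rabs_Ropp in W. simpl. lra.
Qed.

Theorem mainTheorem6 (X : HilbertSpace) (f : X -> R) (xb : X) :
  Phi_lsc_proper f -> Phi_lsc_convex f -> locally_C11 f xb ->
  exists delta, delta > 0 /\
    forall y : X, hnorm (hsub y xb) < delta -> subdiff_lsc_nonempty f y.
Proof.
  intros [phi0 [[a0 [v0 [c0 [Ha0 [Dv0 Ephi]]]]] Hphi]] _ [delta [Df [L [Hd [HG HL]]]]].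
  exists (delta/2). split. lra.
  intros y Hy.
  assert (By : ball delta xb y).
  { unfold ball. assert (T := hnorm_pos (hsub y xb)). lra. }
  destruct (HG y By) as [Ddual _].
  destruct (dual_bound _ Dv0) as [C0 [HC0p HC0]].
  destruct (dual_bound _ Ddual) as [Cy [HCyp HCy]].
  set (r := delta/2).
  set (B := C0 + Cy).
  set (K := 2*a0*NN y + C0 * hnorm y + Rabs c0 + Rabs (f y)).
  assert (Kp : 0 <= K).
  { unfold K. assert (T := NN_pos y). assert (T2 := hnorm_pos y).
    assert (0 <= C0 * hnorm y) by (apply Rmult_le_pos; auto).
    assert (0 <= a0 * NN y) by (apply Rmult_le_pos; auto).
    assert (T3 := Rabs_pos c0). assert (T4 := Rabs_pos (f y)). lra. }
  assert (rp : 0 < r) by (unfold r; lra).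
  set (a := Rmax (Rabs L) (2*a0 + B/r + K/(r*r))).
  assert (aL : Rabs L <= a) by apply Rmax_l.
  assert (aF : 2*a0 + B/r + K/(r*r) <= a) by apply Rmax_r.
  assert (ap : 0 <= a) by (assert (T := Rabs_pos L); lra).
  exists a, (fun x => Df y x + 2*a*H_inner y x).
  split; [exact ap|split].
  - destruct Ddual as [D1 [D2 _]]. split; [|split].
    + intros x z. rewrite D1, inner_add_r. ring.
    + intros t x. rewrite D2, inner_scal_r. ring.
    + exists (Cy + 2*a*hnorm y). intro x.
      eapply Rle_trans. apply Rabs_triang.
      rewrite Rabs_mult, (Rabs_right (2*a)) by lra.
      assert (T := CS y x). assert (T2 := HCy x).
      assert (2*a * Rabs (H_inner y x) <= 2*a*(hnorm y * hnorm x)) by (apply Rmult_le_compat_l; lra).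
      lra.
  - intro x.
    set (h := hsub x y).
    assert (Ex : x = H_add y h) by (unfold h; symmetry; apply add_hsub).
    assert (Nx : NN x = NN y + 2 * H_inner y h + NN h) by (rewrite Ex; apply NN_add).
    rewrite !hnorm_sq, Nx.
    cut (f x - f y - Df y h + a * NN h >= 0). { intro; lra. }
    destruct (Rlt_dec (hnorm h) r) as [Hn|Hn].
    + assert (W := near f xb delta Df L Hd HG HL y h Hy Hn).
      rewrite <- Ex in W. assert (T := NN_pos h).
      assert (Rabs L * NN h <= a * NN h) by (apply Rmult_le_compat_r; lra). lra.
    + apply Rnot_lt_le in Hn.
      set (n := hnorm h) in *.
      assert (fx := Hphi x). rewrite Ephi in fx. unfold phi_lsc in fx.
      rewrite hnorm_sq in fx.
      assert (Q := NN_add_le y h). rewrite <- Ex in Q.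
      assert (V : v0 x = v0 y + v0 h) by (rewrite Ex; apply (proj1 Dv0)).
      assert (V1 := HC0 y). assert (V2 := HC0 h). fold n in V2.
      assert (D := HCy h). fold n in D.
      assert (V1' := Rle_abs (- v0 y)). rewrite Rabs_Ropp in V1'.
      assert (V2' := Rle_abs (- v0 h)). rewrite Rabs_Ropp in V2'.
      assert (D' := Rle_abs (Df y h)).
      assert (Nh : NN h = n*n) by (unfold n; rewrite <- hnorm_sq; ring).
      assert (c0b := Rle_abs (-c0)). rewrite Rabs_Ropp in c0b.
      assert (fyb := RRle_abs (f y)).
      assert (a0x : a0 * NN x <= a0 * (2*NN y + 2*NN h)) by (apply Rmult_le_compat_l; lra).
      assert (Main : (a - 2*a0) * (n*n) - B * n - K >= 0).
      { assert (E1 : B/r * (n*n) >= B*n).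
        { assert (0 <= B) by (unfold B; lra).
          replace (B/r*(n*n)) with (B*n*(n/r)) by (field; lra).
          assert (1 <= n/r) by (apply (Rmult_le_reg_r r); [lra|]; replace (n/r*r) with n by (field; lra); lra).
          assert (0 <= B*n) by (apply Rmult_le_pos; lra). nra. }
        assert (E2 : K/(r*r) * (n*n) >= K).
        { replace (K/(r*r)*(n*n)) with (K*((n/r)*(n/r))) by (field; lra).
          assert (1 <= n/r) by (apply (Rmult_le_reg_r r); [lra|]; replace (n/r*r) with n by (field; lra); lra).
          assert (1 <= (n/r)*(n/r)) by nra. nra. }
        assert (0 <= n*n) by nra.
        assert ((B/r + K/(r*r)) * (n*n) <= (a - 2*a0) * (n*n)) by (apply Rmult_le_compat_r; lra).
        lra. }
      unfold B, K in Main. rewrite Nh in a0x |- *.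
      assert (0 <= C0 * n) by (apply Rmult_le_pos; lra).
      lra.
Qed.
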